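(* Let $\alpha>1/3$, $\beta>0$ and $\varepsilon>0$. There exist almost surely finite random times $N_1,N_2$ (depending on $\varepsilon$) such that: (i) for all $j\in\mathbb{Z}$ and all $k\ge N_1$: if $X_k=j$ and $\Delta_k(j)/k\ge\varepsilon$ then $X_{k+1}=j+1$; if $X_k=j$ and $\Delta_k(j)/k\le-\varepsilon$ then $X_{k+1}=j-1$; (ii) for all $k\ge N_2$ and all $j\in\mathbb{Z}$: if $X_k<j$ then $\Delta_k(j)/k<3\varepsilon/2$, and if $X_k>j$ then $\Delta_k(j)/k>-3\varepsilon/2$.
   Context: Let $\alpha\in\mathbb{R}$ and $\beta>0$. Let $(X_k)_{k\ge0}$ be the nearest-neighbour random walk on $\mathbb{Z}$ with $X_0=0$ defined as follows. For $k\ge0$ and $j\in\mathbb{Z}$, let $l_k(j):=\#\{m\in\{1,\dots,k\}:\{X_{m-1},X_m\}=\{j-1,j\}\}$, let $\mathcal{F}_k=\sigma(X_0,\dots,X_k)$, and let $\Delta_k(j):=-\alpha l_k(j-1)+l_k(j)-l_k(j+1)+\alpha l_k(j+2)$. The transition probabilities are $\mathbb{P}(X_{k+1}=X_k\pm1\mid\mathcal{F}_k)=\dfrac{e^{\pm\beta\Delta_k(X_k)}}{e^{\beta\Delta_k(X_k)}+e^{-\beta\Delta_k(X_k)}}$. *)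

(* Defs.v *)
From Stdlib Require Import Reals ZArith List Classical ClassicalDescription.
Import ListNotations.
Open Scope R_scope.

(* A path prefix is a list of steps: true = +1, false = -1.
   The k-th step (from X_k to X_{k+1}) is [nth k w false]. *)
Definition stepZ (b : bool) : Z := if b then 1%Z else (-1)%Z.

Fixpoint pos (w : list bool) (k : nat) : Z :=
  match k with
  | O => 0%Z
  | S k' => (pos w k' + stepZ (nth k' w false))%Z
  end.

Definition edge_is (a b j : Z) : bool :=
  ((Z.eqb a (j - 1) && Z.eqb b j) || (Z.eqb a j && Z.eqb b (j - 1)))%bool.

Fixpoint ltime (w : list bool) (k : nat) (j : Z) : nat :=
  match k with
  | O => O
  | S k' => (ltime w k' j + (if edge_is (pos w k') (pos w (S k')) j then 1 else 0))%nat
  end.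

Definition Delta (alpha : R) (w : list bool) (k : nat) (j : Z) : R :=
  - alpha * INR (ltime w k (j - 1)) + INR (ltime w k j)
  - INR (ltime w k (j + 1)) + alpha * INR (ltime w k (j + 2)).

Definition p_up (alpha beta : R) (w : list bool) (k : nat) : R :=
  let d := Delta alpha w k (pos w k) in
  exp (beta * d) / (exp (beta * d) + exp (- (beta * d))).

(* probability of the first M steps of the walk being given by w *)
Fixpoint weight (alpha beta : R) (w : list bool) (M : nat) : R :=
  match M with
  | O => 1
  | S M' => weight alpha beta w M' *
            (if nth M' w false then p_up alpha beta w M' else 1 - p_up alpha beta w M')
  end.

Fixpoint paths (M : nat) : list (list bool) :=
  match M with
  | O => [ [] ]
  | S M' => flat_map (fun l => [l ++ [true]; l ++ [false]]) (paths M')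
  end.

Definition ind (P : Prop) : R :=
  if excluded_middle_informative P then 1 else 0.

(* Law of (X_0,...,X_M): probability of an event E determined by the first M steps *)
Definition Prob (alpha beta : R) (M : nat) (E : list bool -> Prop) : R :=
  fold_right Rplus 0 (map (fun w => weight alpha beta w M * ind (E w)) (paths M)).

Definition viol1 (alpha eps : R) (w : list bool) (k : nat) : Prop :=
  exists j : Z, pos w k = j /\
    ((Delta alpha w k j / INR k >= eps /\ pos w (S k) <> (j + 1)%Z) \/
     (Delta alpha w k j / INR k <= - eps /\ pos w (S k) <> (j - 1)%Z)).

Definition viol2 (alpha eps : R) (w : list bool) (k : nat) : Prop :=
  exists j : Z,
    ((pos w k < j)%Z /\ ~ (Delta alpha w k j / INR k < 3 * eps / 2)) \/
    ((pos w k > j)%Z /\ ~ (Delta alpha w k j / INR k > - (3 * eps / 2))).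

(* "a.s. there is a finite N such that no violation occurs at any time k >= N",
   expressed through the finite-dimensional laws:
   P(no violation in [K,oo)) -> 1 as K -> oo, and
   P(no violation in [K,oo)) = inf_M P(no violation in [K,M)). *)
Definition as_eventually_never (alpha beta : R)
  (viol : list bool -> nat -> Prop) : Prop :=
  forall delta : R, delta > 0 ->
    exists K : nat, forall M : nat,
      Prob alpha beta M (fun w => forall k : nat, (K <= k < M)%nat -> ~ viol w k)
        >= 1 - delta.

(* Main.v *)
Require Import Defs.
From Stdlib Require Import Reals ZArith List Lra Lia Classical ClassicalDescription.
Import ListNotations.
Import Defs.
Open Scope R_scope.

Lemma exp_le' x y : x <= y -> exp x <= exp y.
Proof. intros H; destruct (Rle_lt_or_eq_dec _ _ H) as [H1|H1];
  [left; apply exp_increasing; auto | rewrite H1; lra]. Qed.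

Lemma unbounded x : exists n : nat, x < INR n.
Proof.
  destruct (archimed x) as [H1 _].
  exists (Z.to_nat (up x)).
  destruct (Z_le_gt_dec 0 (up x)) as [H|H].
  - rewrite INR_IZR_INZ, Z2Nat.id by lia; lra.
  - assert (IZR (up x) < 0) by (apply IZR_lt; lia).
    pose proof (pos_INR (Z.to_nat (up x))). lra.
Qed.

Lemma pos_S w k : pos w (S k) = (pos w k + stepZ (nth k w false))%Z.
Proof. reflexivity. Qed.
Lemma ltime_S w k j : ltime w (S k) j =
  (ltime w k j + (if edge_is (pos w k) (pos w (S k)) j then 1 else 0))%nat.
Proof. reflexivity. Qed.
Lemma weight_S a b w M : weight a b w (S M) = weight a b w M *
  (if nth M w false then p_up a b w M else 1 - p_up a b w M).
Proof. reflexivity. Qed.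

Section Ext.
Variables (w1 w2 : list bool) (n : nat).
Hypothesis Hw : forall i, (i < n)%nat -> nth i w1 false = nth i w2 false.

Lemma pos_ext k : (k <= n)%nat -> pos w1 k = pos w2 k.
Proof. induction k; intros; [reflexivity|]. rewrite !pos_S, IHk, Hw by lia. reflexivity. Qed.

Lemma ltime_ext k j : (k <= n)%nat -> ltime w1 k j = ltime w2 k j.
Proof. induction k; intros; [reflexivity|].
  rewrite !ltime_S, IHk, (pos_ext k), (pos_ext (S k)) by lia. reflexivity. Qed.

Lemma Delta_ext a k j : (k <= n)%nat -> Delta a w1 k j = Delta a w2 k j.
Proof. intros; unfold Delta; rewrite !(ltime_ext k) by lia; reflexivity. Qed.

Lemma p_up_ext a b k : (k <= n)%nat -> p_up a b w1 k = p_up a b w2 k.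
Proof. intros; unfold p_up; rewrite (pos_ext k), Delta_ext by lia; reflexivity. Qed.

Lemma weight_ext a b k : (k <= n)%nat -> weight a b w1 k = weight a b w2 k.
Proof. induction k; intros; [reflexivity|].
  rewrite !weight_S, IHk, Hw, p_up_ext by lia. reflexivity. Qed.

Lemma viol1_ext a e k : (k < n)%nat -> (viol1 a e w1 k <-> viol1 a e w2 k).
Proof. intros; unfold viol1.
  rewrite (pos_ext k), (pos_ext (S k)) by lia.
  assert (HD : forall j, Delta a w1 k j = Delta a w2 k j) by (intros; apply Delta_ext; lia).
  split; intros [j Hj]; exists j; [rewrite HD in Hj | rewrite <- HD in Hj]; exact Hj.
Qed.
End Ext.

Lemma nth_app1 (l : list bool) b i : (i < length l)%nat -> nth i (l ++ [b]) false = nth i l false.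
Proof. intros; apply app_nth1; auto. Qed.
Lemma nth_app2 (l : list bool) b : nth (length l) (l ++ [b]) false = b.
Proof. rewrite app_nth2, Nat.sub_diag by lia; reflexivity. Qed.

Lemma paths_length M l : In l (paths M) -> length l = M.
Proof.
  revert l; induction M; simpl; intros l H.
  - destruct H as [H|[]]; subst; reflexivity.
  - apply in_flat_map in H as [l' [H1 H2]].
    simpl in H2; destruct H2 as [H2|[H2|[]]]; subst; rewrite length_app, IHM by auto; simpl; lia.
Qed.

Lemma sum_flat (F : list bool -> R) L :
  fold_right Rplus 0 (map F (flat_map (fun l => [l ++ [true]; l ++ [false]]) L)) =
  fold_right Rplus 0 (map (fun l => F (l ++ [true]) + F (l ++ [false])) L).
Proof. induction L; simpl; [reflexivity|]. rewrite IHL; ring. Qed.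

Lemma sum_le {A} (F G : A -> R) L : (forall x, In x L -> F x <= G x) ->
  fold_right Rplus 0 (map F L) <= fold_right Rplus 0 (map G L).
Proof. induction L; simpl; intros H; [lra|].
  assert (F a <= G a) by auto. assert (fold_right Rplus 0 (map F L) <= fold_right Rplus 0 (map G L)) by auto. lra. Qed.

Lemma sum_scale {A} c (F : A -> R) L :
  fold_right Rplus 0 (map (fun x => c * F x) L) = c * fold_right Rplus 0 (map F L).
Proof. induction L; simpl; [ring|]. rewrite IHL; ring. Qed.

Lemma p_up_bounds a b w k : 0 < p_up a b w k < 1.
Proof. unfold p_up.
  set (u := exp _). set (v := exp _).
  assert (0 < u) by apply exp_pos. assert (0 < v) by apply exp_pos.
  split; [apply Rdiv_lt_0_compat; lra|].
  apply (Rmult_lt_reg_r (u+v)); [lra|]. unfold Rdiv; rewrite Rmult_assoc, Rinv_l; lra.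
Qed.

Lemma weight_nonneg a b w M : 0 <= weight a b w M.
Proof. induction M; [simpl; lra|]. rewrite weight_S.
  pose proof (p_up_bounds a b w M). destruct (nth M w false); nra. Qed.

Lemma ind_bounds P : 0 <= ind P <= 1.
Proof. unfold ind; destruct (excluded_middle_informative P); lra. Qed.
Lemma ind_true (P : Prop) : P -> ind P = 1.
Proof. unfold ind; destruct (excluded_middle_informative P); tauto. Qed.
Lemma ind_false (P : Prop) : ~ P -> ind P = 0.
Proof. unfold ind; destruct (excluded_middle_informative P); tauto. Qed.

Lemma Prob_S a b M E : Prob a b (S M) E =
  fold_right Rplus 0 (map (fun l => weight a b l M *
     (p_up a b l M * ind (E (l ++ [true])) + (1 - p_up a b l M) * ind (E (l ++ [false]))))
     (paths M)).
Proof.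
  unfold Prob. change (paths (S M)) with (flat_map (fun l => [l ++ [true]; l ++ [false]]) (paths M)).
  rewrite sum_flat. f_equal. apply map_ext_in. intros l Hl.
  apply paths_length in Hl.
  assert (He : forall bb, forall i, (i < M)%nat -> nth i (l ++ [bb]) false = nth i l false)
    by (intros; apply nth_app1; lia).
  rewrite !weight_S, !(weight_ext _ _ M (He _)), !(p_up_ext _ _ M (He _)) by lia.
  rewrite <- Hl, !nth_app2. ring.
Qed.

Lemma Prob_mono a b M (E1 E2 : list bool -> Prop) : (forall w, E1 w -> E2 w) ->
  Prob a b M E1 <= Prob a b M E2.
Proof. intros H; unfold Prob; apply sum_le; intros w _.
  pose proof (weight_nonneg a b w M). pose proof (H w).
  unfold ind; destruct (excluded_middle_informative (E1 w)), (excluded_middle_informative (E2 w));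
  try tauto; nra. Qed.
Lemma uv_facts b d : exp (b*d) * exp (-(b*d)) = 1.
Proof. rewrite <- exp_plus. replace (b*d + - (b*d)) with 0 by ring. apply exp_0. Qed.

Lemma p_hi b d x : b > 0 -> d >= x ->
  1 - exp (b*d) / (exp (b*d) + exp (-(b*d))) <= exp (-(2*b*x)).
Proof. intros Hb Hd.
  pose proof (uv_facts b d). set (u := exp (b*d)) in *. set (v := exp (-(b*d))) in *.
  assert (0 < u) by apply exp_pos. assert (0 < v) by apply exp_pos.
  assert (v * v <= exp (-(2*b*x))).
  { unfold v; rewrite <- exp_plus; apply exp_le'; nra. }
  assert (1 - u/(u+v) = v/(u+v)) by (field; lra). rewrite H3.
  apply Rle_trans with (v*v); [|lra].
  apply (Rmult_le_reg_r (u+v)); [lra|]. unfold Rdiv; rewrite Rmult_assoc, Rinv_l by lra. nra.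
Qed.

Lemma p_lo b d x : b > 0 -> d <= -x ->
  exp (b*d) / (exp (b*d) + exp (-(b*d))) <= exp (-(2*b*x)).
Proof. intros Hb Hd.
  pose proof (uv_facts b d). set (u := exp (b*d)) in *. set (v := exp (-(b*d))) in *.
  assert (0 < u) by apply exp_pos. assert (0 < v) by apply exp_pos.
  assert (u * u <= exp (-(2*b*x))).
  { unfold u; rewrite <- exp_plus; apply exp_le'; nra. }
  apply Rle_trans with (u*u); [|lra].
  apply (Rmult_le_reg_r (u+v)); [lra|]. unfold Rdiv; rewrite Rmult_assoc, Rinv_l by lra. nra.
Qed.

Lemma viol1_last al e l b : viol1 al e (l ++ [b]) (length l) ->
  (b = true /\ Delta al l (length l) (pos l (length l)) / INR (length l) <= - e) \/
  (b = false /\ Delta al l (length l) (pos l (length l)) / INR (length l) >= e).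
Proof.
  assert (He : forall i, (i < length l)%nat -> nth i (l ++ [b]) false = nth i l false)
    by (intros; apply nth_app1; lia).
  unfold viol1. intros [j [Hj H]].
  rewrite (pos_ext _ _ _ He (length l)) in Hj by lia.
  rewrite pos_S, nth_app2, (pos_ext _ _ _ He (length l)) in H by lia.
  rewrite (Delta_ext _ _ _ He) in H by lia. subst j.
  destruct b; simpl stepZ in H; destruct H as [[H1 H2]|[H1 H2]].
  - exfalso; lia.
  - left; auto.
  - right; auto.
  - exfalso; lia.
Qed.

Definition EM al e K M w := forall k, (K <= k < M)%nat -> ~ viol1 al e w k.

Lemma EM_down al e K l b : EM al e K (S (length l)) (l ++ [b]) -> EM al e K (length l) l.
Proof. intros H k Hk Hv. apply (H k); [lia|].
  apply (viol1_ext (l ++ [b]) l (length l)); [intros; apply nth_app1; lia| lia | exact Hv]. Qed.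

Lemma EM_up al e K l b : EM al e K (length l) l ->
  ((length l < K)%nat \/ ~ viol1 al e (l ++ [b]) (length l)) ->
  EM al e K (S (length l)) (l ++ [b]).
Proof. intros H H2 k Hk Hv.
  destruct (Nat.eq_dec k (length l)) as [->|Hne].
  - destruct H2 as [H2|H2]; [lia| tauto].
  - apply (H k); [lia|].
    apply (viol1_ext (l ++ [b]) l (length l)); [intros; apply nth_app1; lia| lia | exact Hv]. Qed.

Definition cc b e K M := if (K <=? M)%nat then exp (-(2*b*e) * INR M) else 0.

Lemma step al b e K l : b > 0 -> e > 0 -> (1 <= K)%nat ->
  let M := length l in let p := p_up al b l M in
  p * ind (EM al e K (S M) (l ++ [true])) + (1 - p) * ind (EM al e K (S M) (l ++ [false]))
  >= (1 - cc b e K M) * ind (EM al e K M l).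
Proof.
  intros Hb He HK M p.
  pose proof (p_up_bounds al b l M) as Hp. fold p in Hp.
  pose proof (ind_bounds (EM al e K (S M) (l ++ [true]))).
  pose proof (ind_bounds (EM al e K (S M) (l ++ [false]))).
  destruct (classic (EM al e K M l)) as [HE|HE].
  2:{ rewrite (ind_false _ HE), !ind_false; [lra| |];
      intro H'; apply HE; exact (EM_down _ _ _ _ _ H'). }
  rewrite (ind_true _ HE).
  unfold cc. destruct (Nat.leb_spec K M) as [HKM|HKM].
  2:{ rewrite !ind_true by (apply EM_up; auto). lra. }
  assert (HM : 0 < INR M) by (apply lt_0_INR; lia).
  set (d := Delta al l M (pos l M)).
  assert (Hdd : d = d / INR M * INR M) by (field; lra).
  assert (Hexp : 0 < exp (-(2*b*e) * INR M)) by apply exp_pos.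
  destruct (Rle_lt_dec e (d / INR M)) as [H1|H1].
  - rewrite (ind_true (EM al e K (S M) (l ++ [true]))).
    2:{ apply EM_up; auto. right; intro Hv. apply viol1_last in Hv.
        fold M d in Hv. destruct Hv as [[? ?]|[? ?]]; [lra|discriminate]. }
    assert (1 - p <= exp (-(2*b*(e*INR M)))).
    { unfold p, p_up. fold d. apply p_hi; auto. nra. }
    replace (-(2*b*e) * INR M) with (-(2*b*(e*INR M))) by ring. nra.
  - destruct (Rle_lt_dec (d / INR M) (- e)) as [H2|H2].
    + rewrite (ind_true (EM al e K (S M) (l ++ [false]))).
      2:{ apply EM_up; auto. right; intro Hv. apply viol1_last in Hv.
          fold M d in Hv. destruct Hv as [[? ?]|[? ?]]; [discriminate|lra]. }
      assert (p <= exp (-(2*b*(e*INR M)))).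
      { unfold p, p_up. fold d. apply p_lo; auto. nra. }
      replace (-(2*b*e) * INR M) with (-(2*b*(e*INR M))) by ring. nra.
    + rewrite !ind_true.
      2:{ apply EM_up; auto. right; intro Hv. apply viol1_last in Hv.
          fold M d in Hv. destruct Hv as [[? ?]|[? ?]]; lra. }
      2:{ apply EM_up; auto. right; intro Hv. apply viol1_last in Hv.
          fold M d in Hv. destruct Hv as [[? ?]|[? ?]]; lra. }
      nra.
Qed.
Lemma f_step al b e K M : b > 0 -> e > 0 -> (1 <= K)%nat ->
  Prob al b (S M) (EM al e K (S M)) >= (1 - cc b e K M) * Prob al b M (EM al e K M).
Proof. intros Hb He HK.
  rewrite Prob_S. unfold Prob. rewrite <- sum_scale. apply Rle_ge, sum_le.
  intros l Hl. apply paths_length in Hl. subst M.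
  pose proof (step al b e K l Hb He HK) as Hs. simpl in Hs.
  pose proof (weight_nonneg al b l (length l)).
  set (W := weight al b l (length l)) in *.
  set (c := cc b e K (length l)) in *.
  set (I := ind (EM al e K (length l) l)) in *.
  set (Z := p_up al b l (length l) * ind (EM al e K (S (length l)) (l ++ [true])) +
          (1 - p_up al b l (length l)) * ind (EM al e K (S (length l)) (l ++ [false]))) in *.
  assert (W * ((1 - c) * I) <= W * Z) by (apply Rmult_le_compat_l; lra). nra.
Qed.

Section Inv.
Variables (al b e : R) (K : nat).
Hypotheses (Hb : b > 0) (He : e > 0) (HK : (1 <= K)%nat).
Let a := 2*b*e.
Let r := exp (- a).
Let A := exp (-a * INR K) / (1 - r).
Let g M := if (M <=? K)%nat then A else exp (-a * INR M) / (1 - r).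

Lemma r_bounds : 0 < r < 1.
Proof. split; [apply exp_pos|]. rewrite <- exp_0. apply exp_increasing. unfold a; nra. Qed.

Lemma exp_S M : exp (-a * INR (S M)) = exp (-a * INR M) * r.
Proof. rewrite S_INR. unfold r. rewrite <- exp_plus. f_equal. ring. Qed.

Lemma g_facts M : 0 <= g M <= A /\ 0 <= cc b e K M <= 1 /\ cc b e K M <= g M - g (S M).
Proof.
  pose proof r_bounds. pose proof (pos_INR M). pose proof (pos_INR K).
  assert (Ha : a > 0) by (unfold a; nra).
  assert (HA : 0 < A) by (unfold A; apply Rdiv_lt_0_compat; [apply exp_pos|lra]).
  assert (HX : 0 < exp (-a * INR M)) by apply exp_pos.
  assert (Hc1 : exp (-a * INR M) <= 1) by (rewrite <- exp_0; apply exp_le'; nra).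
  unfold g, cc. fold a.
  destruct (Nat.leb_spec M K) as [L1|L1], (Nat.leb_spec K M) as [L2|L2], (Nat.leb_spec (S M) K) as [L3|L3]; try lia.
  - assert (M = K) by lia. subst M. rewrite exp_S. fold A.
    replace (A - exp (- a * INR K) * r / (1 - r)) with (exp (- a * INR K)) by (unfold A; field; lra).
    lra.
  - lra.
  - rewrite exp_S.
    replace (exp (- a * INR M) / (1 - r) - exp (- a * INR M) * r / (1 - r)) with (exp (- a * INR M)) by (field; lra).
    assert (exp (-a * INR M) <= exp (-a * INR K)) by (apply exp_le'; apply le_INR in L2; nra).
    split; [split|].
    + apply Rlt_le, Rdiv_lt_0_compat; lra.
    + unfold A. unfold Rdiv. apply Rmult_le_compat_r; [apply Rlt_le, Rinv_0_lt_compat; lra | lra].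
    + lra.
Qed.

Lemma inv M : Prob al b M (EM al e K M) >= 1 - A + g M.
Proof.
  induction M.
  - unfold Prob. simpl. rewrite ind_true by (intros k Hk; lia).
    unfold g. destruct (Nat.leb_spec 0 K); [lra|lia].
  - pose proof (f_step al b e K M Hb He HK).
    destruct (g_facts M) as [[Hg1 Hg2] [[Hc1 Hc2] Hc3]].
    set (f := Prob al b M (EM al e K M)) in *.
    set (c := cc b e K M) in *.
    assert ((1 - c) * f >= (1 - c) * (1 - A + g M)) by (apply Rle_ge, Rmult_le_compat_l; lra).
    assert (c * (A - g M) >= 0) by nra.
    lra.
Qed.

Lemma A_small : forall d, d > 0 -> exists K', (1 <= K')%nat /\
   exp (-a * INR K') / (1 - r) <= d.
Proof. intros d Hd.
  pose proof r_bounds. assert (Ha : a > 0) by (unfold a; nra).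
  destruct (archimed_cor1 (a * d * (1 - r))) as [N [HN1 HN2]].
  { apply Rmult_lt_0_compat; [nra|lra]. }
  exists N; split; [lia|].
  assert (HNp : 0 < INR N) by (apply lt_0_INR; lia).
  assert (H1 : 1 < INR N * (a * d * (1 - r))).
  { apply Rmult_lt_compat_l with (r := INR N) in HN1; auto.
    rewrite Rinv_r in HN1 by lra. lra. }
  assert (HE : 1 + a * INR N < exp (a * INR N)) by (apply exp_ineq1; nra).
  assert (Hprod : exp (-a * INR N) * exp (a * INR N) = 1).
  { rewrite <- exp_plus. replace (-a * INR N + a * INR N) with 0 by ring. apply exp_0. }
  assert (HX : 0 < exp (-a * INR N)) by apply exp_pos.
  assert (exp (-a * INR N) <= d * (1 - r)).
  { assert (Hq : d * (1 - r) > 0) by (apply Rmult_lt_0_compat; lra).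
    assert (exp (a * INR N) * (d * (1 - r)) > (1 + a * INR N) * (d * (1 - r)))
      by (apply Rmult_lt_compat_r; lra).
    assert (exp (a * INR N) * (d * (1 - r)) > 1) by nra.
    assert (exp (- a * INR N) * (exp (a * INR N) * (d * (1 - r))) >= exp (- a * INR N) * 1)
      by (apply Rle_ge, Rmult_le_compat_l; lra).
    nra. }
  apply (Rmult_le_reg_r (1 - r)); [lra|]. unfold Rdiv. rewrite Rmult_assoc, Rinv_l by lra. lra.
Qed.
End Inv.

Theorem part1 al b e : b > 0 -> e > 0 ->
  forall d, d > 0 -> exists K, (1 <= K)%nat /\ forall M,
    Prob al b M (EM al e K M) >= 1 - d.
Proof. intros Hb He d Hd.
  destruct (A_small b e 1%nat Hb He (le_n 1) d Hd) as [K [HK HA]].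
  exists K; split; auto. intros M.
  pose proof (inv al b e K Hb He HK M).
  pose proof (g_facts b e K Hb He HK M) as [[Hg _] _].
  simpl in *. lra.
Qed.
Lemma ltime_le w k j : (ltime w k j <= k)%nat.
Proof. induction k; [simpl; lia|]. rewrite ltime_S. destruct edge_is; lia. Qed.

Lemma Delta_bound al w k j : 0 <= al -> -(1+al)*INR k <= Delta al w k j <= (1+al)*INR k.
Proof. intros Ha. unfold Delta.
  pose proof (le_INR _ _ (ltime_le w k (j-1))). pose proof (le_INR _ _ (ltime_le w k j)).
  pose proof (le_INR _ _ (ltime_le w k (j+1))). pose proof (le_INR _ _ (ltime_le w k (j+2))).
  pose proof (pos_INR (ltime w k (j-1))). pose proof (pos_INR (ltime w k j)).
  pose proof (pos_INR (ltime w k (j+1))). pose proof (pos_INR (ltime w k (j+2))).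
  nra.
Qed.

Definition Ei w k i := INR (if edge_is (pos w k) (pos w (S k)) i then 1 else 0).

Lemma Delta_S al w k j : Delta al w (S k) j =
  Delta al w k j + (- al * Ei w k (j-1) + Ei w k j - Ei w k (j+1) + al * Ei w k (j+2)).
Proof. unfold Delta, Ei. rewrite !ltime_S, !plus_INR. ring. Qed.

Lemma edge_up x i : edge_is x (x+1) i = Z.eqb i (x+1).
Proof. unfold edge_is.
  destruct (Z.eqb_spec x (i-1)), (Z.eqb_spec (x+1) i), (Z.eqb_spec x i),
    (Z.eqb_spec (x+1) (i-1)), (Z.eqb_spec i (x+1)); simpl; (reflexivity || (exfalso; lia)).
Qed.
Lemma edge_down x i : edge_is x (x-1) i = Z.eqb i x.
Proof. unfold edge_is.
  destruct (Z.eqb_spec x (i-1)), (Z.eqb_spec (x-1) i), (Z.eqb_spec x i),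
    (Z.eqb_spec (x-1) (i-1)), (Z.eqb_spec i x); simpl; (reflexivity || (exfalso; lia)).
Qed.

Lemma det al e w N M : 0 <= al -> e > 0 ->
  (forall k, (N <= k < M)%nat -> ~ viol1 al e w k) ->
  forall k, (k <= M)%nat -> forall j,
  ((pos w k < j)%Z -> Delta al w k j <= e*INR k + (1+al)*INR N + 1) /\
  ((pos w k > j)%Z -> Delta al w k j >= -(e*INR k + (1+al)*INR N + 1)).
Proof.
  intros Ha He Hv. pose proof (pos_INR N) as HN.
  induction k; intros Hk j.
  - assert (Delta al w 0 j = 0) by (unfold Delta; simpl; ring).
    simpl INR; split; intros; nra.
  - assert (IH : forall j, ((pos w k < j)%Z -> Delta al w k j <= e*INR k + (1+al)*INR N + 1) /\
      ((pos w k > j)%Z -> Delta al w k j >= -(e*INR k + (1+al)*INR N + 1))) by (apply IHk; lia).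
    clear IHk.
    set (x := pos w k).
    assert (Hkp : 0 <= INR k) by apply pos_INR.
    assert (F : (pos w (S k) <> (x + 1)%Z -> Delta al w k x <= e * INR k + (1+al)*INR N) /\
                (pos w (S k) <> (x - 1)%Z -> Delta al w k x >= -(e * INR k + (1+al)*INR N))).
    { destruct (Nat.lt_ge_cases k N) as [HkN|HkN].
      - pose proof (Delta_bound al w k x Ha). apply lt_INR in HkN. split; intros; nra.
      - destruct (Nat.eq_dec k 0) as [->|Hk0].
        + pose proof (Delta_bound al w 0 x Ha). simpl INR in *. split; intros; nra.
        + assert (Hkpos : 0 < INR k) by (apply lt_0_INR; lia).
          assert (HD : Delta al w k x = Delta al w k x / INR k * INR k) by (field; lra).
          assert (Hnv : ~ viol1 al e w k) by (apply Hv; lia).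
          split; intros Hne.
          * destruct (Rlt_le_dec (Delta al w k x / INR k) e) as [H1|H1].
            -- nra.
            -- exfalso; apply Hnv; exists x; split; [reflexivity|]. left; split; [lra|exact Hne].
          * destruct (Rlt_le_dec (- e) (Delta al w k x / INR k)) as [H1|H1].
            -- nra.
            -- exfalso; apply Hnv; exists x; split; [reflexivity|]. right; split; [lra|exact Hne]. }
    rewrite S_INR, Delta_S. unfold Ei.
    rewrite pos_S in *. fold x in F |- *.
    destruct (IH j) as [IH1 IH2].
    destruct (nth k w false); simpl stepZ in *.
    + rewrite !edge_up.
      destruct F as [_ F]. assert (F' : Delta al w k x >= -(e * INR k + (1 + al) * INR N)) by (apply F; lia).
      clear F.
      destruct (Z.eqb_spec (j-1) (x+1)), (Z.eqb_spec j (x+1)), (Z.eqb_spec (j+1) (x+1)),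
        (Z.eqb_spec (j+2) (x+1)); simpl INR; try (exfalso; lia);
      split; intros; try (exfalso; lia);
      try (assert (x = j) by lia; subst j; nra);
      try (assert (Delta al w k j <= e*INR k + (1+al)*INR N + 1) by (apply IH1; lia); nra);
      try (assert (Delta al w k j >= -(e*INR k + (1+al)*INR N + 1)) by (apply IH2; lia); nra).
    + rewrite !edge_down.
      destruct F as [F _]. assert (F' : Delta al w k x <= e * INR k + (1 + al) * INR N) by (apply F; lia).
      clear F.
      destruct (Z.eqb_spec (j-1) x), (Z.eqb_spec j x), (Z.eqb_spec (j+1) x),
        (Z.eqb_spec (j+2) x); simpl INR; try (exfalso; lia);
      split; intros; try (exfalso; lia);
      try (assert (x = j) by lia; subst j; nra);
      try (assert (Delta al w k j <= e*INR k + (1+al)*INR N + 1) by (apply IH1; lia); nra);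
      try (assert (Delta al w k j >= -(e*INR k + (1+al)*INR N + 1)) by (apply IH2; lia); nra).
Qed.
Lemma div_lt y x c : 0 < x -> y < c * x -> y / x < c.
Proof. intros. apply (Rmult_lt_reg_r x); auto. unfold Rdiv; rewrite Rmult_assoc, Rinv_l by lra. lra. Qed.
Lemma div_gt y x c : 0 < x -> y > -(c * x) -> y / x > - c.
Proof. intros. apply (Rmult_lt_reg_r x); auto. unfold Rdiv; rewrite Rmult_assoc, Rinv_l by lra. lra. Qed.

Theorem mainTheorem12 (alpha beta eps : R) :
  alpha > 1 / 3 -> beta > 0 -> eps > 0 ->
  as_eventually_never alpha beta (fun w k => viol1 alpha eps w k) /\
  as_eventually_never alpha beta (fun w k => viol2 alpha eps w k).
Proof.
  intros Ha Hb He. split.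
  - intros d Hd. destruct (part1 alpha beta eps Hb He d Hd) as [K [_ HK]].
    exists K. intros M. exact (HK M).
  - intros d Hd. destruct (part1 alpha beta eps Hb He d Hd) as [K1 [HK1 HK]].
    set (C := (1 + alpha) * INR K1).
    destruct (unbounded (2 * (C + 1) / eps)) as [n Hn].
    exists (n + K1 + 1)%nat. intros M.
    eapply Rge_trans; [|exact (HK M)]. apply Rle_ge, Prob_mono.
    intros w Hw k Hk. intros [j [[Hlt Hnn]|[Hgt Hnn]]]; apply Hnn.
    + destruct (det alpha eps w K1 M ltac:(lra) He Hw k ltac:(lia) j) as [H1 _].
      specialize (H1 Hlt). fold C in H1.
      assert (INR n <= INR k) by (apply le_INR; lia).
      assert (Hkp : 0 < INR k) by (apply lt_0_INR; lia).
      assert (2 * (C + 1) < eps * INR k).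
      { assert (2 * (C + 1) = 2 * (C + 1) / eps * eps) by (field; lra). nra. }
      apply div_lt; [lra|]. nra.
    + destruct (det alpha eps w K1 M ltac:(lra) He Hw k ltac:(lia) j) as [_ H1].
      specialize (H1 Hgt). fold C in H1.
      assert (INR n <= INR k) by (apply le_INR; lia).
      assert (Hkp : 0 < INR k) by (apply lt_0_INR; lia).
      assert (2 * (C + 1) < eps * INR k).
      { assert (2 * (C + 1) = 2 * (C + 1) / eps * eps) by (field; lra). nra. }
      apply div_gt; [lra|]. nra.
Qed.
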